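(* In any execution of Algorithm FS, let $v\in V_A^0$ and let $t$ be a round such that $c_t(v)\ge c_t(w)$ for every node $w\ne v$ active in round $t$. Then for every round $t'>t$ and every node $w$ active in round $t'$, $c_{t'}(v)\ge c_{t'}(w)$.
   Context: Model (beeping model with arbitrary activations). $G=(V,E)$ finite connected undirected graph; synchronous rounds; in each round each active node either beeps or listens; a listening node learns only whether at least one neighbor beeped. $T\ge 4$; checkpoints $\mathit{CP}=\{c\in\mathbb{N}_0: c\equiv 0\pmod 4,\ T-c>3\}$. Algorithm FS. Each node $v$ stores $\delta(v)\in\{0,\dots,T-1\}$, $\mathit{State}(v)\in\{\mathit{Inactive},\mathit{Beep},\mathit{Listen}\}$, $\mathit{Induced}(v)\in\{\mathit{true},\mathit{false}\}$. Initially all nodes are Inactive. A node $v$ is activated in round $t$ if the adversary activates it in round $t$, or $v$ is inactive and some neighbor beeps in round $t-1$; then at the beginning of round $t$, $\delta(v)=1$, $\mathit{State}(v)=\mathit{Beep}$, $\mathit{Induced}(v)=\mathit{true}$. In each round each active node $v$, according to its state at the beginning of the round: (1) if $\mathit{State}(v)=\mathit{Beep}$: beeps; $\delta(v)\gets\delta(v)+1\bmod T$; $\mathit{State}(v)\gets\mathit{Listen}$; (2) if $\mathit{State}(v)=\mathit{Listen}$ and some neighbor beeps: if $\delta(v)\equiv c-1\pmod T$ for some $c\in\mathit{CP}$, then $\delta(v)\gets\delta(v)+2\bmod T$, $\mathit{State}(v)\gets\mathit{Beep}$, $\mathit{Induced}(v)\gets\mathit{true}$; else $\delta(v)\gets\delta(v)+1\bmod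 T$; (3) if $\mathit{State}(v)=\mathit{Listen}$ and no neighbor beeps: $\delta(v)\gets\delta(v)+1\bmod T$; then if ($\mathit{Induced}(v)=\mathit{true}$ and new $\delta(v)\in\mathit{CP}$) or new $\delta(v)=0$: $\mathit{State}(v)\gets\mathit{Beep}$, $\mathit{Induced}(v)\gets\mathit{false}$. Rounds are numbered so that round $0$ is the first round at whose beginning some node is active; $V_A^0$ is the set of nodes activated by the adversary in round $0$. Virtual counter: if $v$ is activated in round $t_0$ then $c_{t_0}(v)=0$, and $c_{t+1}(v)=c_t(v)+a$, where $a\in\{1,2\}$ is the amount added to $\delta(v)$ (before reduction mod $T$) in round $t$. *)

(* Defs.v *)
From mathcomp Require Import all_boot.
Set Implicit Arguments. Unset Strict Implicit. Unset Printing Implicit Defensive.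

Definition simple_graph (V : finType) (E : rel V) : Prop :=
  symmetric E /\ irreflexive E.
Definition connected_graph (V : finType) (E : rel V) : Prop :=
  forall x y : V, connect E x y.

Definition isCP (T c : nat) : bool := (c %% 4 == 0) && (3 < T - c).

(* Local state of an active node; [cnt] is the virtual counter c_t(v). *)
Record NState := mkNS { dl : nat; beepst : bool; induced : bool; cnt : nat }.

(* Configuration: None = Inactive. *)
Definition config (V : finType) := V -> option NState.

Section FS.
Variables (V : finType) (E : rel V) (T : nat).

Definition beeps (cf : config V) (u : V) : bool :=
  if cf u is Some s then beepst s else false.

Definition hears (cf : config V) (v : V) : bool := [exists u, E v u && beeps cf u].

Definition node_step (s : NState) (heard : bool) : NState :=
  if beepst s then mkNS ((dl s + 1) %% T) false (induced s) (cnt s + 1)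
  else if heard then
    if [exists c : 'I_T, isCP T c && ((dl s + 1) == c %[mod T])]
    then mkNS ((dl s + 2) %% T) true true (cnt s + 2)
    else mkNS ((dl s + 1) %% T) false (induced s) (cnt s + 1)
  else
    let d := (dl s + 1) %% T in
    if (induced s && isCP T d) || (d == 0)
    then mkNS d true false (cnt s + 1)
    else mkNS d false (induced s) (cnt s + 1).

Definition round_step (cf : config V) : config V :=
  fun v => if cf v is Some s then Some (node_step s (hears cf v)) else None.

Definition fresh : NState := mkNS 1 true true 0.

(* activation at the beginning of a round: an inactive node is activated if the
   adversary activates it, or a neighbour beeped in the previous round
   ([prev] = configuration at the beginning of the previous round, if any). *)
Definition activate (adv : V -> bool) (prev : option (config V)) (cf : config V)
  : config V :=
  fun v => if cf v is Some s then Some s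
           else if adv v || (if prev is Some p then hears p v else false)
                then Some fresh else None.

(* cfg adv t = configuration at the beginning of round t (after activations). *)
Fixpoint cfg (adv : nat -> V -> bool) (t : nat) : config V :=
  match t with
  | 0 => activate (adv 0) None (fun _ => None)
  | t'.+1 => let p := cfg adv t' in activate (adv t) (Some p) (round_step p)
  end.

Definition active (adv : nat -> V -> bool) (t : nat) (v : V) : bool :=
  if cfg adv t v is Some _ then true else false.

(* virtual counter c_t(v) (0 if v inactive in round t) *)
Definition counter (adv : nat -> V -> bool) (t : nat) (v : V) : nat :=
  if cfg adv t v is Some s then cnt s else 0.

End FS.

(* Main.v *)
Require Import Defs.
From mathcomp Require Import all_boot zify.
Set Implicit Arguments. Unset Strict Implicit. Unset Printing Implicit Defensive.

Definition jp T (s : NState) := [exists c : 'I_T, isCP T c && ((dl s + 1) == c %[mod T])].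

Lemma jpP T s : reflect (exists2 c, c < T & isCP T c && ((dl s + 1) %% T == c)) (jp T s).
Proof.
apply: (iffP existsP) => [[c /andP[h1 h2]]|[c cT /andP[h1 h2]]].
  exists c => //; rewrite h1 /=; move: h2; rewrite (modn_small (ltn_ord c)) //.
exists (Ordinal cT); rewrite /= h1 /= (modn_small cT); exact: h2.
Qed.

Definition bgood T b := (b %% 4 <= 1) && (b + 3 <= T).

Lemma arithAB T b k c : bgood T b -> 0 < k < 3 -> (b + k) %% T = c -> isCP T c -> False.
Proof.
move=> /andP[h1 h2] hk; rewrite modn_small; last by lia.
move=> <- /andP[/eqP h3 _].
have: (b + k) %% 4 = (b %% 4 + k) %% 4 by rewrite modnDml.
lia.
Qed.

Lemma arithC T d c : 4 <= T -> d < T -> (d + 1) %% T = c -> isCP T c -> ~~ isCP T d && (d != 0).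
Proof.
move=> HT hd; case: (ltnP (d+1) T) => h.
  rewrite modn_small // => <- /andP[/eqP h3 _].
  rewrite /isCP; apply/andP; split; last by apply/eqP; lia.
  apply/negP => /andP[/eqP h4 _].
  have: (d + 1) %% 4 = (d %% 4 + 1) %% 4 by rewrite modnDml.
  lia.
have -> : d = T.-1 by lia.
move=> _ _; rewrite /isCP; apply/andP; split; last by apply/eqP; lia.
apply/negP => /andP[_ h5]; lia.
Qed.

Lemma node_step_cnt T s h :
  cnt (node_step T s h) = cnt s + (if ~~ beepst s && h && jp T s then 2 else 1).
Proof.
rewrite /node_step -/(jp T s); case: (beepst s) => //=; case: h => /=.
  by case: (jp T s).
by case: ifP.
Qed.

Definition NI T s := (dl s = (cnt s + 1) %% T) /\ (beepst s -> bgood T (dl s)).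

Lemma dlE T s : NI T s -> (dl s + 1) %% T = (cnt s + 2) %% T.
Proof. by move=> [-> _]; rewrite modnDml -addnA. Qed.

Lemma NI_step T s h : 4 <= T -> NI T s -> NI T (node_step T s h).
Proof.
move=> HT [hd hb].
have e1 : (dl s + 1) %% T = (cnt s + 1 + 1) %% T by rewrite hd modnDml.
rewrite /node_step -/(jp T s).
case: (beepst s) hb => [_|_] /=.
  by split => //=; rewrite e1.
case: h => /=.
  case: ifP => hj /=.
    split; first by rewrite /= hd modnDml -addnA -addnA.
    move=> _; case/jpP: hj => c cT /andP[hc /eqP hc2].
    have -> : (dl s + 2) %% T = (c + 1) %% T by rewrite -hc2 modnDml -addnA.
    move: hc; rewrite /isCP /bgood => /andP[/eqP h1 h2].
    rewrite (@modn_small (c + 1)); last by lia.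
    have: (c + 1) %% 4 = (c %% 4 + 1) %% 4 by rewrite modnDml.
    move=> hm; rewrite /bgood /=; apply/andP; split; lia.
  by split => //=; rewrite e1.
case: ifP => hc /=; split => //; try by rewrite e1.
move=> _; case/orP: hc => [/andP[_ /andP[/eqP h1 h2]]|/eqP ->]; rewrite /bgood /=; last by lia.
apply/andP; split; lia.
Qed.

Lemma listen_keep T s h c : 4 <= T -> NI T s -> ~~ (~~ beepst s && h && jp T s) ->
  c < T -> isCP T c -> (cnt s + 3) %% T = c ->
  ~~ beepst (node_step T s h) /\ jp T (node_step T s h).
Proof.
move=> HT hn hj cT hc e.
have hn' := NI_step h HT hn.
have hjp : jp T (node_step T s h).
  apply/jpP; exists c => //; rewrite hc /= (dlE hn') node_step_cnt (negbTE hj).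
  by rewrite -addnA e.
split => //; clear hjp hn'.
move: hj; rewrite /node_step -/(jp T s); case: (beepst s) => //= hj.
case: h hj => /= hj; first by rewrite (negbTE hj).
have hd : (dl s + 1) %% T < T by apply: ltn_pmod; lia.
have := arithC HT hd _ hc.
have e' : ((dl s + 1) %% T + 1) %% T = c by case: hn => hd' _; rewrite modnDml hd' -addnA modnDml -!addnA.
move=> /(_ e') /andP[h1 h2]; case: ifP => //=; rewrite (negbTE h1) (negbTE h2) andbF //.
Qed.

Lemma cfgS (V : finType) (E : rel V) T adv t x :
  cfg E T adv t.+1 x =
  match cfg E T adv t x with
  | Some s => Some (node_step T s (hears E (cfg E T adv t) x))
  | None => if adv t.+1 x || hears E (cfg E T adv t) x then Some fresh else None
  end.
Proof. rewrite /= /activate /round_step; by case: (cfg E T adv t x). Qed.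

Lemma cfg0 (V : finType) (E : rel V) T adv x :
  cfg E T adv 0 x = if adv 0 x then Some fresh else None.
Proof. by rewrite /= /activate orbF. Qed.

Lemma beepsP (V : finType) (cf : config V) u : beeps cf u -> exists2 su, cf u = Some su & beepst su.
Proof. rewrite /beeps; case: (cf u) => // s hs; by exists s. Qed.

Lemma hears_of (V : finType) (E : rel V) (cf : config V) x y sx :
  E y x -> cf x = Some sx -> beepst sx -> hears E cf y.
Proof. move=> hyx hx hb; apply/existsP; exists x; by rewrite hyx /beeps hx. Qed.

Lemma jump_beep T s h : ~~ beepst s && h && jp T s -> beepst (node_step T s h).
Proof. rewrite /node_step -/(jp T s) => /andP[/andP[/negbTE -> ->] ->] //. Qed.

Lemma fresh_step T h : cnt (node_step T fresh h) = 1.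
Proof. by []. Qed.

Lemma noJumpMax T s su : 4 <= T -> NI T s -> NI T su -> beepst su -> jp T s ->
  cnt su <= cnt s <= cnt su + 1 -> False.
Proof.
move=> HT hs hsu hb /jpP[c cT /andP[hc /eqP hc2]] hr.
have hg := proj2 hsu hb; rewrite (proj1 hsu) in hg.
rewrite (dlE hs) in hc2.
case/andP: hr => h1 h2.
case: (ltngtP (cnt s) (cnt su)) => h3; first by lia.
  have e : cnt s + 2 = cnt su + 1 + 2 by lia.
  rewrite e -modnDml in hc2.
  apply: (arithAB hg _ hc2 hc); by [].
have e : cnt s + 2 = cnt su + 1 + 1 by lia.
rewrite e -modnDml in hc2; apply: (arithAB hg _ hc2 hc); by [].
Qed.

Definition EI (V : finType) (E : rel V) T (cf : config V) :=
  forall x y, E x y -> match cf x, cf y with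
  | Some sx, Some sy => cnt sx <= cnt sy + 2 /\
      (cnt sx = cnt sy + 2 -> beepst sx /\ ~~ beepst sy /\ jp T sy)
  | Some sx, None => sx = fresh
  | _, _ => True end.

Definition Inv (V : finType) (E : rel V) T adv t :=
  (forall x s, cfg E T adv t x = Some s -> NI T s /\ cnt s <= t) /\ EI E T (cfg E T adv t).

Lemma NI_fresh T : 4 <= T -> NI T fresh.
Proof. move=> HT; split => /=; first by rewrite modn_small //; lia.
move=> _; rewrite /bgood; apply/andP; split => //; lia. Qed.

Lemma inv_all (V : finType) (E : rel V) T adv : symmetric E -> 4 <= T -> forall t, Inv E T adv t.
Proof.
move=> Hsym HT; elim=> [|t [IHn IHe]].
  split.
    move=> x s; rewrite cfg0; case: (adv 0 x) => // [[<-]]; split => //; exact: NI_fresh.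
  move=> x y _; rewrite !cfg0; case: (adv 0 x); case: (adv 0 y) => //.
set p := cfg E T adv t.
split.
  move=> x s; rewrite cfgS -/p.
  case ex: (p x) => [sx|]; last first.
    by case: ifP => // _ [<-]; split => //; exact: NI_fresh.
  move=> [<-]; have [hn hc] := IHn _ _ ex.
  split; first exact: NI_step.
  rewrite node_step_cnt; case: ifP => hj; last by lia.
  case: (ltnP (cnt sx) t) => hlt; first by lia.
  exfalso; case/andP: hj => /andP[hnb /existsP[u /andP[hxu /beepsP[su hu hbu]]]] hjp.
  have [hnu hcu] := IHn _ _ hu.
  have := IHe _ _ hxu; rewrite -/p ex hu => -[h1 h2].
  apply: (noJumpMax HT hn hnu hbu hjp).
  case: (ltnP (cnt su + 1) (cnt sx)) => h3.
    have /h2 [h4 _] : cnt sx = cnt su + 2 by lia.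
    by rewrite h4 in hnb.
  apply/andP; split; lia.
move=> x y hxy; rewrite !cfgS -/p.
have hyx : E y x by rewrite Hsym.
case ex: (p x) => [sx|]; case ey: (p y) => [sy|].
- have := IHe _ _ hxy; rewrite -/p ex ey => -[h1 h2].
  have [hnx _] := IHn _ _ ex; have [hny _] := IHn _ _ ey.
  rewrite !node_step_cnt.
  case: (boolP (cnt sx == cnt sy + 2)) => [/eqP heq|hne].
    have [hbx [hby hjy]] := h2 heq.
    have hh : hears E p y by apply: (hears_of hyx ex hbx).
    rewrite hbx hby hh hjy /=; split; lia.
  move/eqP: hne => hne.
  case hjx: (~~ beepst sx && hears E p x && jp T sx);
  case hjy: (~~ beepst sy && hears E p y && jp T sy); split; try lia;
    move=> heq; try (exfalso; lia).
  split; first by rewrite jump_beep.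
  move: hjx => /andP[_ /jpP[c cT /andP[hc /eqP hc2]]].
  rewrite (dlE hnx) in hc2.
  apply: (listen_keep HT hny _ cT hc); first by rewrite hjy.
  rewrite -hc2; congr (_ %% _); lia.
- have := IHe _ _ hxy; rewrite -/p ex ey => hf; subst sx.
  have hh : hears E p y by apply: (hears_of hyx ex).
  by rewrite hh orbT.
- have := IHe _ _ hyx; rewrite -/p ex ey => hf; subst sy.
  by case: ifP.
- by case: (adv t.+1 x || hears E p x); case: (adv t.+1 y || hears E p y).
Qed.

Lemma v_lower (V : finType) (E : rel V) T (adv : nat -> V -> bool) v : adv 0 v ->
  forall t, exists2 s, cfg E T adv t v = Some s & t <= cnt s.
Proof.
move=> hv; elim=> [|t [s hs hc]].
  by exists fresh; rewrite // cfg0 hv.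
rewrite cfgS hs; eexists; first by reflexivity.
rewrite node_step_cnt; case: ifP => _; lia.
Qed.

Theorem mainTheorem9 (V : finType) (E : rel V) (T : nat)
  (adv : nat -> V -> bool) (v : V) (t : nat) :
  simple_graph E -> connected_graph E -> 4 <= T ->
  adv 0 v ->
  (forall w, w != v -> active E T adv t w -> counter E T adv t w <= counter E T adv t v) ->
  forall t' w, t < t' -> active E T adv t' w ->
    counter E T adv t' w <= counter E T adv t' v.
Proof.
move=> [Hsym _] _ HT hv _ t' w _ hw.
have [s hs hc] := v_lower E T hv t'.
have [Hn _] := inv_all adv Hsym HT t'.
move: hw; rewrite /counter /active hs.
case hw: (cfg E T adv t' w) => [sw|] // _.
have := proj2 (Hn _ _ hw); lia.
Qed.
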